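(* For integers $k\ge1$ and $0\le m\le k$, $$C_{1/2,m}(k):=\sum_{j=0}^m(-1)^j\binom{m}{j}\binom{j/2}{k}=(-1)^k\,\frac{2^{-2k+m}\,m}{2k-m}\binom{2k-m}{k}.$$
   Context: For real $x$ and $k\in\mathbb{N}$, $\binom{x}{k}=x(x-1)\cdots(x-k+1)/k!$. *)

(* Defs.v *)
From HB Require Import structures.
From mathcomp Require Import all_boot all_order all_algebra.
Set Implicit Arguments. Unset Strict Implicit. Unset Printing Implicit Defensive.
Import Order.TTheory GRing.Theory Num.Theory.
Local Open Scope ring_scope.

Definition gbinom (R : numFieldType) (x : R) (k : nat) : R :=
  (\prod_(i < k) (x - i%:R)) / (k`!)%:R.

(* Main.v *)
Require Import Defs.
From HB Require Import structures.
From mathcomp Require Import all_boot all_order all_algebra.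
From mathcomp Require Import ring zify.
Set Implicit Arguments. Unset Strict Implicit. Unset Printing Implicit Defensive.
Import Order.TTheory GRing.Theory Num.Theory.
Local Open Scope ring_scope.

Section S.
Variable R : numFieldType.

Lemma natr_neq0 n : (n.+1)%:R != 0 :> R.
Proof. by rewrite pnatr_eq0. Qed.

Lemma fact_neq0 n : (n`!)%:R != 0 :> R.
Proof. by rewrite pnatr_eq0 -lt0n fact_gt0. Qed.

Lemma gbinomS (x : R) k : gbinom x k.+1 = gbinom x k * (x - k%:R) / (k.+1)%:R.
Proof.
rewrite /gbinom big_ord_recr /= factS natrM.
have h1 := fact_neq0 k; have h2 := natr_neq0 k.
field.
by rewrite addrC natr1 h1 h2.
Qed.

Lemma gbinom0 (x : R) : gbinom x 0 = 1.
Proof. by rewrite /gbinom big_ord0 divr1. Qed.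

Definition b (j : nat) k : R := gbinom (j%:R / 2%:R) k.
Definition F N m k : R := \sum_(j < N) (-1) ^+ j * ('C(m, j))%:R * b j k.
Definition Hs N m k : R := \sum_(j < N) (-1) ^+ j * ('C(m, j))%:R * b j.+1 k.

Lemma F_eq N m k : (m < N)%N -> F N m k = F m.+1 m k.
Proof.
move=> hN; rewrite /F (big_ord_widen N (fun j => (-1) ^+ j * ('C(m, j))%:R * b j k) hN).
rewrite [RHS]big_mkcond /=; apply: eq_bigr => i _.
case: ifP => // /negbT; rewrite -leqNgt => hi.
by rewrite bin_small // mulr0 mul0r.
Qed.

Lemma F_pascal N p k : F N.+1 p.+1 k = F N.+1 p k - Hs N p k.
Proof.
rewrite /F /Hs !big_ord_recl /= !bin0 -addrA; congr (_ + _).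
rewrite -sumrB; apply: eq_bigr => i _.
rewrite /bump /= binS natrD exprS; ring.
Qed.

Definition Wt N p k : R := \sum_(j < N.+1) (-1) ^+ j * ('C(p.+1, j))%:R * (j%:R / 2%:R * b j k).
Lemma F_weight N p k : Wt N p k = - (p.+1%:R / 2%:R) * Hs N p k.
Proof.
rewrite /Wt big_ord_recl /= !mul0r mulr0 add0r /Hs mulr_sumr; apply: eq_bigr => i _.
rewrite /bump /= exprS.
have e : ('C(p.+1, i.+1) * i.+1 = p.+1 * 'C(p, i))%N by rewrite mulnC -mul_bin_diag.
have e' : ('C(p.+1, i.+1))%:R * (i.+1)%:R = (p.+1)%:R * ('C(p, i))%:R :> R.
  by rewrite -!natrM e.
have h2 : (2%:R : R) != 0 by rewrite pnatr_eq0.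
rewrite !add1n.
transitivity (-(('C(p.+1,i.+1))%:R * (i.+1)%:R) * (-1)^+i * b i.+1 k / 2%:R); first by ring.
rewrite e'; ring.
Qed.

Lemma F_rec p k :
  F p.+2 p.+1 k.+1 * (k.+1)%:R
  = ((p.+1)%:R / 2%:R - k%:R) * F p.+2 p.+1 k - ((p.+1)%:R / 2%:R) * F p.+2 p k.
Proof.
have eH : Hs p.+1 p k = F p.+2 p k - F p.+2 p.+1 k by rewrite F_pascal; ring.
have W := F_weight p.+1 p k.
rewrite eH in W.
have -> : F p.+2 p.+1 k.+1 * (k.+1)%:R =
  Wt p.+1 p k - k%:R * F p.+2 p.+1 k.
  rewrite /F /Wt mulr_suml mulr_sumr -sumrB; apply: eq_bigr => j _.
  rewrite /b gbinomS. have h2 := natr_neq0 k. field. by rewrite addrC natr1.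
rewrite W; ring.
Qed.

Definition f m k := F m.+1 m k.

Definition H m k : R := (-1) ^+ k * m%:R * (((2 * k - m).-1)`!)%:R
   / (2%:R ^+ (2 * k - m) * (k`!)%:R * ((k - m)`!)%:R).

Lemma H_step p a k (hk0 : k = (p.+1 + a)%N) :
  H p.+1 k.+1 * (k.+1)%:R
  = ((p.+1)%:R / 2%:R - k%:R) * H p.+1 k - ((p.+1)%:R / 2%:R) * H p k.
Proof.
rewrite /H.
have e1 : (2 * k.+1 - p.+1 = (p + 2 * a).+3)%N by rewrite hk0; lia.
have e2 : (2 * k - p.+1 = (p + 2 * a).+1)%N by rewrite hk0; lia.
have e3 : (2 * k - p = (p + 2 * a).+2)%N by rewrite hk0; lia.
have e4 : (k.+1 - p.+1 = a.+1)%N by rewrite hk0; lia.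
have e5 : (k - p.+1 = a)%N by rewrite hk0; lia.
have e6 : (k - p = a.+1)%N by rewrite hk0; lia.
rewrite e1 e2 e3 e4 e5 e6 /=.
rewrite !factS !natrM !exprS.
have hk : k%:R = (p%:R + 1 + a%:R : R) by rewrite hk0 -addn1 !natrD; ring.
have hkf := fact_neq0 k; have haf := fact_neq0 a; have hnf := fact_neq0 (p + 2 * a).
have h2 : (2%:R : R) != 0 by rewrite pnatr_eq0.
have h2n : (2%:R ^+ (p + 2 * a) : R) != 0 by rewrite expf_neq0.
have hk1 := natr_neq0 k; have ha1 := natr_neq0 a.
move: hkf haf hnf h2n hk1 ha1.
set X := (p + 2*a)`!%:R; set T := (2%:R : R) ^+ (p+2*a); set K := k`!%:R; set A := a`!%:R.
move=> hkf haf hnf h2n hk1 ha1.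
have c1 : ((p + 2*a).+2%:R : R) = p%:R + 2%:R * a%:R + 2%:R by rewrite -addn2 !natrD; ring.
have c2 : ((p + 2*a).+1%:R : R) = p%:R + 2%:R * a%:R + 1 by rewrite -addn1 !natrD; ring.
have c3 : (k.+1%:R : R) = p%:R + a%:R + 2%:R by rewrite hk0 -addn1 !natrD; ring.
have c4 : (a.+1%:R : R) = a%:R + 1 by rewrite -addn1 !natrD.
have c5 : (p.+1%:R : R) = p%:R + 1 by rewrite -addn1 !natrD.
move: hk1 ha1; rewrite c1 c2 c3 c4 c5 hk => hk1 ha1.
field.
by rewrite hk1 ha1 hkf haf h2n.
Qed.


Lemma f_rec p k :
  f p.+1 k.+1 * (k.+1)%:R
  = ((p.+1)%:R / 2%:R - k%:R) * f p.+1 k - ((p.+1)%:R / 2%:R) * f p k.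
Proof. by rewrite /f F_rec (@F_eq p.+2 p k). Qed.

Lemma f_00 : f 0 0 = 1.
Proof. by rewrite /f /F big_ord1 /b gbinom0 bin0 expr0 !mul1r. Qed.

Lemma f_S0 m : f m.+1 0 = 0.
Proof.
have := F_pascal m.+1 m 0.
rewrite /f => ->.
rewrite (@F_eq m.+2 m 0) // /Hs /F /b.
rewrite -sumrB big1 // => i _; rewrite !gbinom0; ring.
Qed.

Lemma f_0S k : f 0 k.+1 = 0.
Proof.
rewrite /f /F big_ord1 /b /gbinom big_ord_recl /= !mul0r.
by rewrite subr0 !mul0r mulr0.
Qed.

Lemma H_0 k : H 0 k = 0.
Proof. by rewrite /H mulr0 !mul0r. Qed.

Lemma H_diag q : H q.+2 q.+2 * (q.+2)%:R = - ((q.+2)%:R / 2%:R) * H q.+1 q.+1.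
Proof.
rewrite /H.
have e1 : (2 * q.+2 - q.+2 = q.+2)%N by lia.
have e2 : (2 * q.+1 - q.+1 = q.+1)%N by lia.
rewrite e1 e2 !subnn /= !factS !natrM !exprS fact0 mulr1.
have hq := fact_neq0 q; have h2 : (2%:R : R) != 0 by rewrite pnatr_eq0.
have h2n : (2%:R ^+ q : R) != 0 by rewrite expf_neq0.
have hq1 := natr_neq0 q; have hq2 := natr_neq0 q.+1.
have c1 : (q.+2%:R : R) = q%:R + 2%:R by rewrite -addn2 natrD.
have c2 : (q.+1%:R : R) = q%:R + 1 by rewrite -addn1 natrD.
move: hq1 hq2; rewrite c1 c2 => hq1 hq2.
field.
by rewrite hq h2n hq1 hq2.
Qed.

Lemma f_1 m : f m 1 = if (m <= 1)%N then H m 1 else 0.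
Proof.
case: m => [|[|p]] /=.
- by rewrite f_0S H_0.
- apply: (mulIf (natr_neq0 0)) => /=; rewrite f_rec f_S0 f_00 /H /=.
  have h2 : (2%:R : R) != 0 by rewrite pnatr_eq0.
  change ((1 / 2%:R - 0) * 0 - 1 / 2%:R * 1 = (-1) ^+ 1 * 1 * (1%N)%:R / (2%:R ^+ 1 * (1%N)%:R * (1%N)%:R) * 1 :> R).
  rewrite !expr1; field; by [].
- apply: (mulIf (natr_neq0 0)) => /=; by rewrite f_rec !f_S0 !mulr0 subr0 mul0r.
Qed.

Lemma f_main k : forall m, f m k.+1 = if (m <= k.+1)%N then H m k.+1 else 0.
Proof.
elim: k => [|k IH] m; first exact: f_1.
case: m => [|p]; first by rewrite f_0S H_0.
apply: (mulIf (natr_neq0 k.+1)) => /=; rewrite f_rec !IH.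
case: (ltngtP p.+1 k.+2) => hp.
- have hp1 : (p < k.+1)%N by [].
  have hp2 : (p <= k.+1)%N by lia.
  rewrite hp1 hp2; symmetry.
  by apply: (H_step (a := (k.+1 - p.+1)%N)); rewrite subnKC.
- have hp1 : (p < k.+1)%N = false by apply/negbTE; rewrite -leqNgt; lia.
  have hp2 : (p <= k.+1)%N = false by apply/negbTE; rewrite -ltnNge; lia.
  by rewrite hp1 hp2 !mulr0 subr0 mul0r.
- case: hp => ->.
  rewrite ltnn leqnn mulr0 sub0r.
  by rewrite H_diag mulNr.
Qed.
End S.

Theorem mainTheorem4 (R : numFieldType) (k m : nat) (hk : (1 <= k)%N) (hm : (m <= k)%N) :
  \sum_(j < m.+1) (-1) ^+ j * ('C(m, j))%:R * gbinom ((j%:R) / 2%:R : R) k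
  = (-1) ^+ k * ((2%:R ^+ (2 * k - m)%N)^-1 * m%:R / ((2 * k - m)%N)%:R)
      * ('C((2 * k - m)%N, k))%:R.
Proof.
case: k hk hm => [//|k] _ hm.
have -> : \sum_(j < m.+1) (-1) ^+ j * ('C(m, j))%:R * gbinom ((j%:R) / 2%:R : R) k.+1
  = f R m k.+1 by [].
rewrite f_main hm /H.
have [q hq] : exists q, (2 * k.+1 - m = q.+1)%N by exists (2 * k.+1 - m).-1; lia.
rewrite hq /=.
have hb := bin_fact (_ : (k.+1 <= q.+1)%N); move: hb.
have hkq : (k.+1 <= q.+1)%N by lia.
move=> /(_ hkq).
have -> : (q.+1 - k.+1 = k.+1 - m)%N by lia.
move=> hb.
have hbR : ('C(q.+1, k.+1))%:R * ((k.+1)`!%:R * ((k.+1 - m)`!)%:R) = ((q.+1)`!)%:R :> R.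
  by rewrite -!natrM hb.
have hf1 := @fact_neq0 R k.+1; have hf2 := @fact_neq0 R (k.+1 - m).
have hC : ('C(q.+1, k.+1))%:R = ((q.+1)`!)%:R / ((k.+1)`!%:R * ((k.+1 - m)`!)%:R) :> R.
  by rewrite -hbR mulfK // mulf_neq0.
rewrite hC (factS q) natrM.
have h2n : (2%:R ^+ q.+1 : R) != 0 by rewrite expf_neq0 // pnatr_eq0.
have hq1 := @natr_neq0 R q; have hqf := @fact_neq0 R q.
field.
by rewrite h2n hf1 hf2 addrC natr1 hq1.
Qed.
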